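(* Let $d=e_1+\varepsilon\gamma$ with $\gamma\in\Gamma$ and $\varepsilon\ge0$ sufficiently small, with orientations chosen so that $Vd\ge0$. Write $I^*(d)=\{0\}\cup I_1\cup I_2$ with $I_1\subseteq\{1,\dots,m\}$, $I_2\subseteq\{m+1,\dots,2m\}$. Then $g^*(d)=A_{I^*(d)}d$, where $$A_{I^*(d)}=\frac1nJ+\begin{bmatrix}V_{I_1}^T & V_{I_2}^T\end{bmatrix}\left(\begin{bmatrix}V_{I_1}\\ V_{I_2}\end{bmatrix}\begin{bmatrix}V_{I_1}^T & V_{I_2}^T\end{bmatrix}\right)^{+}\begin{bmatrix}(1-\lambda)V_{I_1}\\(1+\lambda)V_{I_2}\end{bmatrix}\in\mathbb R^{n\times n}.$$
   Context: $\mathcal G$ is a simple connected oriented graph with $n$ nodes, $m$ edges, incidence matrix $C$ and PTDF matrix $V=C(C^TC)^+$ ($^+$ = Moore–Penrose pseudoinverse); $e$ is the all-ones vector, $J=ee^T$, $e_1$ the first unit vector, $\lambda\in(0,1)$. $g^*(d)$ is the unique minimizer of $\frac12\sum_ig_i^2$ over $g\in\mathbb R^n_{\ge0}$ with $e^Tg=e^Td$ and $-\lambda|Vd|\le V(d-g)\le\lambda|Vd|$; when $Vd\ge0$ the feasible set is $\mathcal F_d=\{g\ge0:e^Tg=e^Td,(1-\lambda)Vd\le Vg\le(1+\lambda)Vd\}$. $\Gamma=\{\gamma\in\mathbb R^n:\gamma_1=0,\gamma\ge0,e^T\gamma=1\}$. Hyperplanes: $H_0=\{g:e^Tg=e^Td\}$,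 $H_i=\{g:(Vg)_i=(1-\lambda)(Vd)_i\}$, $H_{m+i}=\{g:(Vg)_i=(1+\lambda)(Vd)_i\}$ ($i=1,\dots,m$), and $I^*(d)=\{j\in\{0,\dots,2m\}:g^*(d)\in H_j\}$. $V_{I_1}$ is the matrix of rows $j\in I_1$ of $V$ and $V_{I_2}$ the matrix of rows $k-m$, $k\in I_2$, of $V$. *)

(* Defs.v *)
From HB Require Import structures.
From mathcomp Require Import all_boot all_order all_algebra.
From mathcomp Require Import reals.
From Stdlib Require Import ClassicalEpsilon.
Set Implicit Arguments. Unset Strict Implicit. Unset Printing Implicit Defensive.
Import Order.TTheory GRing.Theory Num.Theory.
Local Open Scope ring_scope.

Section Defs.
Variable R : realType.

(* Moore-Penrose pseudoinverse: the (unique) X satisfying the four Penrose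
   equations (real matrices, so conjugate transpose = transpose). *)
Definition is_pinv (p q : nat) (A : 'M[R]_(p, q)) (X : 'M[R]_(q, p)) : Prop :=
  [/\ A *m X *m A = A, X *m A *m X = X,
      (A *m X)^T = A *m X & (X *m A)^T = X *m A].

Definition pinv (p q : nat) (A : 'M[R]_(p, q)) : 'M[R]_(q, p) :=
  epsilon (inhabits 0) (is_pinv A).

Definition adj (n m : nat) (src dst : 'I_m -> 'I_n) : rel 'I_n :=
  fun u v => [exists e, ((src e == u) && (dst e == v)) ||
                        ((src e == v) && (dst e == u))].

Definition simple_connected_oriented (n m : nat) (src dst : 'I_m -> 'I_n) : Prop :=
  [/\ (forall e, src e != dst e),
      (forall e e', [set src e; dst e] = [set src e'; dst e'] -> e = e')
    & (forall u v, connect (adj src dst) u v)].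

Definition incidence (n m : nat) (src dst : 'I_m -> 'I_n) : 'M[R]_(m, n) :=
  \matrix_(e < m, v < n) ((v == src e)%:R - (v == dst e)%:R).

Definition PTDF (n m : nat) (src dst : 'I_m -> 'I_n) : 'M[R]_(m, n) :=
  let C := incidence src dst in C *m pinv (C^T *m C).

Definition e1 (n : nat) : 'cV[R]_n := \col_(i < n) ((val i == 0%N)%:R).

Definition in_Gamma (n : nat) (gam : 'cV[R]_n) : Prop :=
  [/\ (forall i : 'I_n, val i = 0%N -> gam i 0 = 0),
      (forall i, 0 <= gam i 0) & \sum_i gam i 0 = 1].

Definition feasible (n m : nat) (lam : R) (V : 'M[R]_(m, n)) (d g : 'cV[R]_n) : Prop :=
  [/\ (forall i, 0 <= g i 0), \sum_i g i 0 = \sum_i d i 0 &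
      (forall k, - lam * `|(V *m d) k 0| <= (V *m (d - g)) k 0
                 /\ (V *m (d - g)) k 0 <= lam * `|(V *m d) k 0|)].

Definition is_gstar (n m : nat) (lam : R) (V : 'M[R]_(m, n)) (d g : 'cV[R]_n) : Prop :=
  feasible lam V d g /\
  (forall h, feasible lam V d h ->
     2^-1 * \sum_i (g i 0) ^+ 2 <= 2^-1 * \sum_i (h i 0) ^+ 2).

(* I_1, I_2 (the latter indexed by i with m+i in I^*(d)) *)
Definition I1set (n m : nat) (lam : R) (V : 'M[R]_(m, n)) (d g : 'cV[R]_n) : {set 'I_m} :=
  [set i | (V *m g) i 0 == (1 - lam) * (V *m d) i 0].
Definition I2set (n m : nat) (lam : R) (V : 'M[R]_(m, n)) (d g : 'cV[R]_n) : {set 'I_m} :=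
  [set i | (V *m g) i 0 == (1 + lam) * (V *m d) i 0].

Definition rows_of (n m : nat) (V : 'M[R]_(m, n)) (I : {set 'I_m}) : 'M[R]_(#|I|, n) :=
  \matrix_(k < #|I|) row (enum_val k) V.

Definition Amat (n m : nat) (lam : R) (V : 'M[R]_(m, n)) (I1 I2 : {set 'I_m}) : 'M[R]_n :=
  let W := col_mx (rows_of V I1) (rows_of V I2) in
  let B := col_mx ((1 - lam) *: rows_of V I1) ((1 + lam) *: rows_of V I2) in
  (n%:R)^-1 *: const_mx 1 + W^T *m pinv (W *m W^T) *m B.

End Defs.

(* Main.v *)
Set Warnings "-all".
Require Import Defs.
From HB Require Import structures.
From mathcomp Require Import all_boot all_order all_algebra.
From mathcomp Require Import reals.
From mathcomp Require Import ring lra.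
From Stdlib Require Import ClassicalEpsilon.
Import Order.TTheory GRing.Theory Num.Theory.
Local Open Scope ring_scope.

Section Gen.
Variable R : realType.

Lemma trmul_eq0 {p q : nat} {A : 'M[R]_(p, q)} : A^T *m A = 0 -> A = 0.
Proof.
move=> H; apply/matrixP => i j.
have := congr1 (fun M : 'M[R]_q => M j j) H; rewrite !mxE => Hs.
have Hs' : \sum_k (A k j) ^+ 2 = 0.
  by rewrite -[RHS]Hs; apply: eq_bigr => k _; rewrite mxE expr2.
have := @psumr_eq0P _ _ xpredT (fun k => A k j ^+ 2) (fun k _ => sqr_ge0 _) Hs' i isT.
by move/eqP; rewrite sqrf_eq0 => /eqP ->.
Qed.

Lemma gram_unit {r q : nat} (G : 'M[R]_(r, q)) : row_free G -> G *m G^T \in unitmx.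
Proof.
move=> fG; rewrite -row_free_unit; apply: inj_row_free => v Hv.
have H1 : (v *m G)^T^T *m (v *m G)^T = 0.
  by rewrite trmxK trmx_mul !mulmxA -(mulmxA v) Hv mul0mx.
have := trmul_eq0 H1 => /(congr1 trmx); rewrite trmxK trmx0 => H2.
by apply: (row_free_inj fG); rewrite H2 mul0mx.
Qed.

Lemma pinv_fact {p r q : nat} (F : 'M[R]_(p, r)) (G : 'M[R]_(r, q)) :
  G *m G^T \in unitmx -> F^T *m F \in unitmx -> exists X, is_pinv (F *m G) X.
Proof.
move=> uG uF.
set IG := invmx (G *m G^T); set IF := invmx (F^T *m F).
have sIG : IG^T = IG by rewrite /IG trmx_inv trmx_mul trmxK.
have sIF : IF^T = IF by rewrite /IF trmx_inv trmx_mul trmxK.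
exists (G^T *m IG *m IF *m F^T).
have AX : F *m G *m (G^T *m IG *m IF *m F^T) = F *m IF *m F^T.
  by rewrite !mulmxA -(mulmxA F G) -(mulmxA F) mulmxV // mulmx1.
have XA : (G^T *m IG *m IF *m F^T) *m (F *m G) = G^T *m IG *m G.
  by rewrite !mulmxA -(mulmxA _ F^T F) -(mulmxA _ IF) mulVmx // mulmx1.
split.
- by rewrite AX !mulmxA -(mulmxA _ F^T F) -(mulmxA F IF) mulVmx // mulmx1.
- by rewrite XA !mulmxA -(mulmxA _ G G^T) -(mulmxA _ (G *m G^T) IG) mulmxV // mulmx1.
- by rewrite AX !trmx_mul trmxK sIF mulmxA.
- by rewrite XA !trmx_mul trmxK sIG mulmxA.
Qed.

Lemma pinv_ok {p q : nat} (A : 'M[R]_(p, q)) : is_pinv A (pinv A).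
Proof.
apply: epsilon_spec.
have uG : row_base A *m (row_base A)^T \in unitmx by apply: gram_unit; apply: row_base_free.
have uF : (col_base A)^T *m (col_base A)^T^T \in unitmx.
  apply: gram_unit; rewrite /row_free mxrank_tr.
  by have := col_base_full A; rewrite /row_full.
rewrite trmxK in uF.
by have := pinv_fact (col_base A) (row_base A) uG uF; rewrite mulmx_base.
Qed.

Lemma pinv_gram (p q : nat) (W : 'M[R]_(p, q)) :
  W^T *m pinv (W *m W^T) *m (W *m W^T) = W^T.
Proof.
set M := W *m W^T; set Y := pinv M.
have [h1 h2 h3 h4] := pinv_ok M.
set E := Y *m M - 1%:M.
have ME : M *m E = 0 by rewrite /E mulmxBr mulmxA h1 mulmx1 subrr.
have ET : E^T = E by rewrite /E linearB /= h4 trmx1.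
have : (W^T *m E)^T *m (W^T *m E) = 0.
  by rewrite trmx_mul ET trmxK -!mulmxA (mulmxA W) -/M ME mulmx0.
move/trmul_eq0; rewrite /E mulmxBr mulmx1 mulmxA => /eqP; rewrite subr_eq0.
by move/eqP.
Qed.

End Gen.
Arguments trmul_eq0 {R p q A}.
Arguments pinv_ok {R p q}.
Arguments pinv_gram {R p q}.
Section Graph.
Variable R : realType.
Variables n m : nat.
Variables src dst : 'I_m -> 'I_n.
Hypothesis conn : forall u v, connect (adj src dst) u v.
Local Notation C := (incidence R src dst).
Local Notation L := (C^T *m C).
Local Notation X := (pinv L).
Local Notation ee := (const_mx 1 : 'cV[R]_n).

Lemma sum_ind (a : 'I_n) (f : 'I_n -> R) : \sum_v (v == a)%:R * f v = f a.
Proof.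
rewrite (bigD1 a) //= eqxx mul1r big1 ?addr0 // => v /negbTE ->.
by rewrite mul0r.
Qed.

Lemma Cx_entry p (x : 'M[R]_(n, p)) k j : (C *m x) k j = x (src k) j - x (dst k) j.
Proof.
rewrite mxE; under eq_bigr => v _ do rewrite mxE mulrBl.
by rewrite sumrB !sum_ind.
Qed.

Lemma Ce : C *m ee = 0.
Proof. by apply/matrixP=> k j; rewrite Cx_entry !mxE subrr. Qed.

Lemma LT : L^T = L.
Proof. by rewrite trmx_mul trmxK. Qed.

Lemma Xe : X *m ee = 0.
Proof.
have [h1 h2 h3 h4] := pinv_ok L.
by rewrite -h2 -(mulmxA X L X) -h3 trmx_mul LT -!mulmxA Ce !mulmx0.
Qed.

Lemma Ve : PTDF R src dst *m ee = 0.
Proof. by rewrite /PTDF /= -mulmxA Xe mulmx0. Qed.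

Lemma ker_const {p} {U : 'M[R]_(n, p)} : L *m U = 0 -> forall i i' j, U i j = U i' j.
Proof.
move=> H.
have CU : C *m U = 0.
  apply: trmul_eq0.
  by rewrite trmx_mul -mulmxA (mulmxA C^T C U) H mulmx0.
have E k j : U (src k) j = U (dst k) j.
  have := congr1 (fun M : 'M[R]_(m, p) => M k j) CU; rewrite Cx_entry mxE => /eqP.
  by rewrite subr_eq0 => /eqP.
move=> i i' j; have := conn i i'; case/connectP => q pth ->.
elim: q i pth => //= w q IH i /andP[aiw pw].
rewrite -(IH _ pw).
case/existsP: aiw => k /orP[/andP[/eqP<- /eqP<-]|/andP[/eqP<- /eqP<-]] //.
Qed.

Lemma P_entry (h : 'cV[R]_n) i : (L *m X *m h) i 0 = h i 0 - n%:R^-1 * \sum_j h j 0.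
Proof.
have [h1 h2 h3 h4] := pinv_ok L.
set E := 1%:M - L *m X.
have LXE : L *m X = 1%:M - E by rewrite /E opprB addrC subrK.
have ET : E^T = E by rewrite /E linearB /= h3 trmx1.
have LE : L *m E = 0.
  rewrite -LT -ET -trmx_mul /E mulmxBl mul1mx h1 subrr.
  by rewrite trmx0.
have Ecol := ker_const LE.
have Es a b : E a b = E b a.
  by have := congr1 (fun M : 'M[R]_n => M b a) ET; rewrite mxE.
have Ec a b : E a b = E i i.
  by rewrite (Ecol a i b) Es (Ecol b i i).
have Ee : E *m ee = ee by rewrite /E mulmxBl mul1mx -(mulmxA L X) Xe mulmx0 subr0.
clearbody E.
have nc : n%:R * E i i = 1.
  have := congr1 (fun M : 'cV[R]_n => M i 0) Ee; rewrite [RHS]mxE [LHS]mxE => Hs; rewrite -[RHS]Hs.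
  under eq_bigr => b _ do rewrite (Ec i b) mxE mulr1.
  by rewrite mulr_natl sumr_const card_ord.
have n0 : n%:R != 0 :> R by rewrite pnatr_eq0 -lt0n; apply: (leq_ltn_trans (leq0n i)).
have cE : E i i = n%:R^-1 by rewrite -[E i i](mulKf n0) nc mulr1.
rewrite LXE mulmxBl mul1mx !mxE; congr (_ - _).
rewrite mulr_sumr; apply: eq_bigr => b _.
by rewrite Ec cE.
Qed.

Lemma e1E {n0 : 'I_n} : val n0 = 0%N -> forall j, e1 R n j 0 = (j == n0)%:R.
Proof. by move=> v0 j; rewrite mxE -v0. Qed.

Lemma sum_e1 {n0 : 'I_n} : val n0 = 0%N -> \sum_j e1 R n j 0 = 1.
Proof.
move=> v0; under eq_bigr => j _ do rewrite (e1E v0) -[(_ == _)%:R]mulr1.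
by rewrite sum_ind.
Qed.

Lemma Ve1_in (n0 : 'I_n) : val n0 = 0%N ->
  forall k, dst k = n0 -> (PTDF R src dst *m e1 R n) k 0 <= 0.
Proof.
move=> v0 k dk.
set p := X *m e1 R n.
have Lp j : (L *m p) j 0 = (j == n0)%:R - n%:R^-1.
  by rewrite /p mulmxA P_entry (e1E v0) (sum_e1 v0) mulr1.
have pdef : X *m e1 R n = p by [].
clearbody p.
have [j _ Hj] := @arg_maxP _ _ _ n0 xpredT (fun j => p j 0) isT.
have jn : j = n0.
  apply/eqP; apply: contraT => jn0.
  have : (L *m p) j 0 < 0.
    rewrite Lp (negbTE jn0) sub0r oppr_lt0 invr_gt0 ltr0n lt0n.
    by rewrite -lt0n; apply: (leq_ltn_trans (leq0n j))...
  rewrite -mulmxA mxE ltNge => /negP H; exfalso; apply: H.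
  apply: sumr_ge0 => k' _; rewrite Cx_entry !mxE.
  case: (eqVneq j (src k')) => [<-|ns]; case: (eqVneq j (dst k')) => [<-|nd].
  - by rewrite subrr mul0r.
  - by rewrite /= mulr1n mulr0n subr0 mul1r subr_ge0; apply: Hj.
  - by rewrite /= mulr1n mulr0n sub0r mulN1r opprB subr_ge0; apply: Hj.
  - by rewrite subrr mul0r.
rewrite /PTDF /= -mulmxA pdef Cx_entry dk subr_le0 -jn.
by apply: Hj.
Qed.

End Graph.
Section Helpers.
Variable R : realType.

Lemma small_t (I : finType) (f : I -> R) :
  (forall i, 0 < f i) -> exists t, [/\ 0 < t, t <= 1 & forall i, t <= f i].
Proof.
move=> fp.
set S := \sum_i (f i)^-1.
have Sp : 0 <= S by apply: sumr_ge0 => i _; rewrite invr_ge0 ltW.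
have S1 : 0 < 1 + S by rewrite ltr_pwDl.
exists (1 + S)^-1; split.
- by rewrite invr_gt0.
- by rewrite invf_le1 // lerDl.
- move=> i; rewrite -[f i]invrK lef_pV2 ?posrE ?invr_gt0 //.
  rewrite /S (bigD1 i) //= addrCA lerDl addr_ge0 // sumr_ge0 // => j _.
  by rewrite invr_ge0 ltW.
Qed.

Lemma le_sum_term (I : finType) (F : I -> R) i :
  (forall j, 0 <= F j) -> F i <= \sum_j F j.
Proof.
move=> Fp; rewrite (bigD1 i) //= lerDl sumr_ge0 //.
Qed.

Lemma sum_sq_sub (I : finType) (f h : I -> R) t :
  \sum_i (f i - t * h i) ^+ 2 =
  \sum_i f i ^+ 2 - 2 * t * \sum_i f i * h i + t ^+ 2 * \sum_i h i ^+ 2.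
Proof.
rewrite !mulr_sumr -sumrB -big_split /=; apply: eq_bigr => i _; ring.
Qed.

Lemma rows_entry n m (V : 'M[R]_(m, n)) (I : {set 'I_m}) p (x : 'M[R]_(n, p)) j c :
  (rows_of V I *m x) j c = (V *m x) (enum_val j) c.
Proof. by rewrite !mxE; apply: eq_bigr => l _; rewrite !mxE. Qed.

Lemma mxDE p q (A B : 'M[R]_(p, q)) i j : (A + B) i j = A i j + B i j.
Proof. by rewrite mxE. Qed.
Lemma mxBE p q (A B : 'M[R]_(p, q)) i j : (A - B) i j = A i j - B i j.
Proof. by rewrite !mxE. Qed.
Lemma mxNE p q (A : 'M[R]_(p, q)) i j : (- A) i j = - A i j.
Proof. by rewrite mxE. Qed.
Lemma mxZE p q a (A : 'M[R]_(p, q)) i j : (a *: A) i j = a * A i j.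
Proof. by rewrite mxE. Qed.
Lemma mxcE p q a i j : (const_mx a : 'M[R]_(p, q)) i j = a.
Proof. by rewrite mxE. Qed.

End Helpers.
Arguments mxDE {R p q}.
Arguments small_t {R I}.
Arguments le_sum_term {R I}.
Arguments mxBE {R p q}.
Arguments mxZE {R p q}.
Arguments mxNE {R p q}.
Arguments mxcE {R p q}.

Lemma contra_aux (R : realType) (t Q G : R) : 0 < t -> t <= 1 -> 0 < t * Q ->
  t ^+ 2 * Q <= t * Q -> G <= G - 2 * t * Q + t ^+ 2 * Q -> False.
Proof. move=> *; lra. Qed.

Lemma opt_formula (R : realType) (n m : nat) (lam : R) (V : 'M[R]_(m, n)) (d g : 'cV[R]_n) :
  (0 < n)%N -> V *m (const_mx 1 : 'cV[R]_n) = 0 ->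
  (forall k, 0 <= (V *m d) k 0) ->
  is_gstar lam V d g -> (forall i, 0 < g i 0) ->
  g = Amat lam V (I1set lam V d g) (I2set lam V d g) *m d.
Proof.
move=> npos Ve Vdp [[gnn gsum gcon] gopt] gpos.
have nR0 : 0 < n%:R :> R by rewrite ltr0n.
set I1 := I1set lam V d g; set I2 := I2set lam V d g.
set W := col_mx (rows_of V I1) (rows_of V I2).
set B := col_mx ((1 - lam) *: rows_of V I1) ((1 + lam) *: rows_of V I2).
set Y := pinv (W *m W^T).
set ee := const_mx 1 : 'cV[R]_n.
set s := \sum_i d i 0.
set J := (n%:R^-1 * s) *: ee.
have AJ : ((n%:R)^-1 *: const_mx 1 : 'M[R]_n) *m d = J.
  apply/matrixP => i j; rewrite !ord1 -scalemxAl !mxZE mxcE mulr1 mxE; congr (_ * _).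
  by apply: eq_bigr => k _; rewrite mxcE mul1r.
have Re (I : {set 'I_m}) : rows_of V I *m ee = 0.
  by apply/matrixP => j c; rewrite rows_entry Ve !mxE.
have We : W *m ee = 0 by rewrite /W mul_col_mx !Re col_mx0.
have WJ : W *m J = 0 by rewrite /J -scalemxAr We scaler0.
have WI (x : 'cV[R]_n) : W *m x = 0 -> forall k, k \in I1 :|: I2 -> (V *m x) k 0 = 0.
  move/eqP; rewrite /W mul_col_mx col_mx_eq0 => /andP[/eqP h1 /eqP h2] k.
  rewrite inE => /orP[kI|kI].
    have := congr1 (fun M : 'cV[R]_#|I1| => M (enum_rank_in kI k) 0) h1.
    by rewrite rows_entry enum_rankK_in // => ->; rewrite mxE.
  have := congr1 (fun M : 'cV[R]_#|I2| => M (enum_rank_in kI k) 0) h2.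
  by rewrite rows_entry enum_rankK_in // => ->; rewrite mxE.
have Bd : B *m d = W *m g.
  rewrite /B /W !mul_col_mx -!scalemxAl; congr col_mx; apply/matrixP => j c;
    by rewrite (ord1 c) mxZE !rows_entry; have := enum_valP j; rewrite inE => /eqP ->.
set y := g - J.
set P := Y^T *m W.
set u := P *m y.
set r := y - W^T *m u.
have WWYW : W *m W^T *m P = W.
  have := congr1 trmx (pinv_gram W); rewrite !trmx_mul !trmxK => h.
  by rewrite /P /Y h.
have Wr : W *m r = 0 by rewrite /r mulmxBr mulmxA /u mulmxA WWYW subrr.
have dot_as (x z : 'cV[R]_n) : \sum_i x i 0 * z i 0 = (x^T *m z) 0 0.
  by rewrite mxE; apply: eq_bigr => i _; rewrite mxE.
have sumJ : \sum_i J i 0 = s.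
  under eq_bigr => i _ do rewrite mxZE mxcE mulr1.
  rewrite sumr_const card_ord -[_ *+ n]mulr_natr; field; by rewrite gt_eqF.
have sWt (v : 'cV[R]_(#|I1| + #|I2|)) : \sum_i (W^T *m v) i 0 = 0.
  rewrite (eq_bigr (fun i => ee i 0 * (W^T *m v) i 0)); last first.
    by move=> i _; rewrite mxcE mul1r.
  by rewrite dot_as mulmxA -trmx_mul We trmx0 mul0mx mxE.
have rE i : r i 0 = g i 0 - J i 0 - (W^T *m u) i 0.
  by rewrite /r /y !(mxBE (R:=R)).
have sr : \sum_i r i 0 = 0.
  under eq_bigr => i _ do rewrite rE.
  by rewrite !sumrB sWt sumJ gsum subrr subr0.
have gdec : g = J + W^T *m u + r.
  by apply/matrixP => i j; rewrite /r /y !mxDE !mxNE; ring.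
have rdef : r = y - W^T *m u by [].
clearbody r.
have gr : \sum_i g i 0 * r i 0 = \sum_i r i 0 ^+ 2.
  rewrite {1}gdec; under eq_bigr => i _ do rewrite !mxDE !mulrDl.
  rewrite !big_split /=.
  have -> : \sum_i J i 0 * r i 0 = 0.
    under eq_bigr => i _ do rewrite mxZE mxcE mulr1.
    by rewrite -mulr_sumr sr mulr0.
  have -> : \sum_i (W^T *m u) i 0 * r i 0 = 0.
    by rewrite dot_as trmx_mul trmxK -mulmxA Wr mulmx0 mxE.
  by rewrite !add0r; apply: eq_bigr => i _; rewrite expr2.
have lo k : (1 - lam) * (V *m d) k 0 <= (V *m g) k 0.
  have [h1 h2] := gcon k; move: h1 h2.
  have e : (V *m (d - g)) k 0 = (V *m d) k 0 - (V *m g) k 0 by rewrite mulmxBr mxBE.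
  rewrite e (ger0_norm (Vdp k)); lra.
have hi k : (V *m g) k 0 <= (1 + lam) * (V *m d) k 0.
  have [h1 h2] := gcon k; move: h1 h2.
  have e : (V *m (d - g)) k 0 = (V *m d) k 0 - (V *m g) k 0 by rewrite mulmxBr mxBE.
  rewrite e (ger0_norm (Vdp k)); lra.
have gapL k : k \notin I1 -> (1 - lam) * (V *m d) k 0 < (V *m g) k 0.
  by rewrite inE lt_neqAle lo andbT eq_sym.
have gapU k : k \notin I2 -> (V *m g) k 0 < (1 + lam) * (V *m d) k 0.
  by rewrite inE lt_neqAle hi andbT.
have Q0 : \sum_i r i 0 ^+ 2 = 0.
  apply/eqP; apply: contraT => Qn.
  have Qp : 0 < \sum_i r i 0 ^+ 2.
    by rewrite lt_def Qn sumr_ge0 // => i _; rewrite sqr_ge0.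
  have n1p (x : R) : 0 < `|x| + 1 by rewrite ltr_wpDl.
  pose f1 i := g i 0 / (`|r i 0| + 1).
  pose f2 k := if k \in I1 :|: I2 then 1 else
     ((V *m g) k 0 - (1 - lam) * (V *m d) k 0) / (`|(V *m r) k 0| + 1).
  pose f3 k := if k \in I1 :|: I2 then 1 else
     ((1 + lam) * (V *m d) k 0 - (V *m g) k 0) / (`|(V *m r) k 0| + 1).
  have [t1 [t1p t1le ht1]] := small_t f1 (fun i => divr_gt0 (gpos i) (n1p _)).
  have f2p k : 0 < f2 k.
    rewrite /f2; case: ifPn => // ; rewrite inE negb_or => /andP[k1 k2].
    by rewrite divr_gt0 // subr_gt0 gapL.
  have f3p k : 0 < f3 k.
    rewrite /f3; case: ifPn => // ; rewrite inE negb_or => /andP[k1 k2].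
    by rewrite divr_gt0 // subr_gt0 gapU.
  have [t2 [t2p _ ht2]] := small_t f2 f2p.
  have [t3 [t3p _ ht3]] := small_t f3 f3p.
  set t := Num.min t1 (Num.min t2 t3).
  have tp : 0 < t by rewrite !lt_min t1p t2p t3p.
  have t1' : t <= 1 by rewrite ge_min t1le.
  have tf1 i : t <= f1 i by rewrite ge_min ht1.
  have tf2 k : t <= f2 k by rewrite !ge_min ht2 orbT.
  have tf3 k : t <= f3 k by rewrite !ge_min ht3 !orbT.
  pose g' := g - t *: r.
  have g'E i : g' i 0 = g i 0 - t * r i 0 by rewrite mxBE mxZE.
  have feas : feasible lam V d g'.
    split.
    - move=> i; rewrite g'E.
      have := tf1 i; rewrite /f1 ler_pdivlMr // => h.
      have := ler_wpM2l (ltW tp) (ler_norm (r i 0)); lra.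
    - under eq_bigr => i _ do rewrite g'E.
      by rewrite sumrB -mulr_sumr sr mulr0 subr0 gsum.
    - move=> k.
      have e : (V *m (d - g')) k 0 = (V *m d) k 0 - (V *m g) k 0 + t * (V *m r) k 0.
        by rewrite /g' !mulmxBr -scalemxAr !mxBE mxZE; ring.
      rewrite e ger0_norm ?Vdp //.
      have := lo k; have := hi k.
      case: (boolP (k \in I1 :|: I2)) => kI.
        by rewrite (WI r Wr k kI); split; lra.
      have := tf2 k; have := tf3 k; rewrite /f2 /f3 (negbTE kI).
      rewrite !ler_pdivlMr // => h3 h2.
      have hn' : - (V *m r) k 0 <= `|(V *m r) k 0| by rewrite -normrN ler_norm.
      have := ler_wpM2l (ltW tp) hn'; have := ler_wpM2l (ltW tp) (ler_norm ((V *m r) k 0)).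
      by split; lra.
  have := gopt g' feas.
  rewrite ler_pM2l ?invr_gt0 //.
  under [X in _ <= X]eq_bigr => i _ do rewrite g'E.
  rewrite sum_sq_sub gr.
  set Q := \sum_i r i 0 ^+ 2.
  have : t ^+ 2 * Q <= t * Q.
    rewrite ler_pM2r // expr2 -[X in _ <= X]mulr1 ler_pM2l //.
  have := mulr_gt0 tp Qp.
  rewrite -/Q => h1 h2 h3.
  exfalso; exact: (@contra_aux _ _ _ _ tp t1' h1 h2 h3).
have r0 : r = 0.
  apply: trmul_eq0; apply/matrixP => i j; rewrite !ord1 [RHS]mxE [LHS]mxE -[RHS]Q0.
  by apply: eq_bigr => k _; rewrite mxE expr2.
have yW : y = W^T *m u.
  by move: rdef; rewrite r0 => /esym/eqP; rewrite subr_eq0 => /eqP.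
have Wg : W *m g = W *m y by rewrite /y mulmxBr WJ subr0.
have ydef : y = g - J by [].
clearbody u y.
rewrite /Amat /= mulmxDl AJ -!mulmxA -/W -/Y Bd Wg yW !mulmxA.
rewrite -(mulmxA (W^T *m Y) W W^T) /Y pinv_gram -yW ydef.
by rewrite addrC subrK.
Qed.

Theorem mainTheorem4 (R : realType) (n m : nat) (src dst : 'I_m -> 'I_n) (lam : R) :
  simple_connected_oriented src dst -> 0 < lam < 1 ->
  forall gam : 'cV[R]_n, in_Gamma gam ->
  exists2 eps0 : R, 0 < eps0 &
    forall eps : R, 0 <= eps <= eps0 ->
    let V := PTDF R src dst in
    let d := e1 R n + eps *: gam in
    (forall k, 0 <= (V *m d) k 0) ->
    forall g : 'cV[R]_n, is_gstar lam V d g ->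
    g = Amat lam V (I1set lam V d g) (I2set lam V d g) *m d.
Proof.
move=> [_ _ conn] /andP[lam0 lam1] gam [gam0 gamp gams].
have [nz|npos] := posnP n.
  exists 1 => // eps _ V d _ g _.
  by apply/matrixP => -[i hi] j; exfalso; move: hi; rewrite nz.
pose n0 : 'I_n := Ordinal npos.
have v0 : val n0 = 0%N by [].
have gn0 : gam n0 0 = 0 by apply: gam0.
have nR : 1 <= n%:R :> R by rewrite ler1n.
have nR0 : 0 < n%:R :> R by rewrite ltr0n.
set K1 := \sum_k `|(PTDF R src dst *m gam) k 0|.
set K2 := \sum_i gam i 0 ^+ 2 + 2.
set K := 4 * K1 + 2 * K2.
set a := lam / n%:R.
have K1p : 0 <= K1 by apply: sumr_ge0 => k _.
have K2p : 0 <= K2 by rewrite addr_ge0 // sumr_ge0 // => i _; rewrite sqr_ge0.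
have Kp : 0 <= K by rewrite /K addr_ge0 // mulr_ge0.
have ap : 0 < a by rewrite divr_gt0.
exists (Num.min 1 (a ^+ 2 / (K + 1))).
  by rewrite lt_min ltr01 divr_gt0 ?exprn_gt0 // ltr_wpDl.
move=> eps /andP[e0 eeps] /=.
set V := PTDF R src dst.
set d := e1 R n + eps *: gam.
move=> Vdp g [[gnn gsum gcon] gopt].
have eps1 : eps <= 1 by move: eeps; rewrite le_min => /andP[].
have epsK : eps * K < a ^+ 2.
  have : eps <= a ^+ 2 / (K + 1) by move: eeps; rewrite le_min => /andP[].
  rewrite ler_pdivlMr ?ltr_wpDl // => h.
  have a2 : 0 < a ^+ 2 by rewrite exprn_gt0.
  nra.
have dE i : d i 0 = (i == n0)%:R + eps * gam i 0.
  by rewrite mxDE (@e1E _ _ _ v0) mxZE.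
have dp i : 0 <= d i 0 by rewrite dE addr_ge0 ?mulr_ge0.
have sd : \sum_i d i 0 = 1 + eps.
  rewrite (eq_bigr (fun i => (i == n0)%:R * 1 + eps * gam i 0)); last first.
    by move=> i _; rewrite dE mulr1.
  by rewrite big_split /= sum_ind -mulr_sumr gams mulr1.
set s := 1 + eps.
have sg : \sum_i g i 0 = s by rewrite gsum sd.
have Ve0 k : (V *m (const_mx 1 : 'cV[R]_n)) k 0 = 0 by rewrite /V Ve mxE.
have lo k : (1 - lam) * (V *m d) k 0 <= (V *m g) k 0.
  have [h1 h2] := gcon k; move: h1 h2.
  have e : (V *m (d - g)) k 0 = (V *m d) k 0 - (V *m g) k 0 by rewrite mulmxBr mxBE.
  rewrite e (ger0_norm (Vdp k)); lra.
have hi k : (V *m g) k 0 <= (1 + lam) * (V *m d) k 0.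
  have [h1 h2] := gcon k; move: h1 h2.
  have e : (V *m (d - g)) k 0 = (V *m d) k 0 - (V *m g) k 0 by rewrite mulmxBr mxBE.
  rewrite e (ger0_norm (Vdp k)); lra.

have CtV (h : 'cV[R]_n) : \sum_k ((n0 == src k)%:R - (n0 == dst k)%:R) * (V *m h) k 0
    = h n0 0 - n%:R^-1 * \sum_j h j 0.
  transitivity (((incidence R src dst)^T *m (V *m h)) n0 0).
    by rewrite mxE; apply: eq_bigr => k _; congr (_ * _); rewrite !mxE.
  by rewrite /V /PTDF /= !mulmxA (@P_entry _ _ _ _ _ conn).
have term k : (1 - lam) * (((n0 == src k)%:R - (n0 == dst k)%:R) * (V *m d) k 0)
      - 2 * lam * ((n0 == dst k)%:R * (V *m d) k 0)
    <= ((n0 == src k)%:R - (n0 == dst k)%:R) * (V *m g) k 0.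
  have := lo k; have := hi k; have := Vdp k.
  by case: (n0 == src k); case: (n0 == dst k) => /=; rewrite ?mulr1n ?mulr0n; lra.
set q := s / n%:R.
set B := \sum_k (n0 == dst k)%:R * (V *m d) k 0.
have flow : (1 - lam) * (d n0 0 - q) - 2 * lam * B <= g n0 0 - q.
  have := ler_sum (index_enum _) (P := xpredT) (fun k _ => term k).
  by rewrite sumrB -!mulr_sumr !CtV -/B sg sd -/s [_^-1 * s]mulrC -/q.
have inb : B <= eps * K1.
  rewrite /K1 mulr_sumr; apply: ler_sum => k _.
  case: eqP => [dk|_]; last by rewrite mul0r mulr_ge0.
  rewrite mul1r /d mulmxDr -scalemxAr mxDE mxZE.
  have := @Ve1_in R n m src dst conn n0 v0 k (esym dk).
  have := ler_wpM2l e0 (ler_norm ((V *m gam) k 0)).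
  rewrite /V; lra.
set c := lam * q.
set hs := (1 - lam) *: d + c *: (const_mx 1 : 'cV[R]_n).
have hsE i : hs i 0 = (1 - lam) * d i 0 + c by rewrite mxDE !mxZE mxcE mulr1.
have s1 : 1 <= s by rewrite /s lerDl.
have q0 : 0 <= q by rewrite divr_ge0 // ltW // (lt_le_trans ltr01).
have c0 : 0 <= c by rewrite mulr_ge0 // ltW.
have hsp i : c <= hs i 0 by rewrite hsE lerDr mulr_ge0 // subr_ge0 ltW.
have hsum (x : 'cV[R]_n) : \sum_i x i 0 * hs i 0 =
    (1 - lam) * (x n0 0 + eps * \sum_i x i 0 * gam i 0) + c * \sum_i x i 0.
  rewrite (eq_bigr (fun i => (1 - lam) * ((i == n0)%:R * x i 0) +
     ((1 - lam) * eps) * (x i 0 * gam i 0) + c * x i 0)); last first.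
    by move=> i _; rewrite hsE dE; ring.
  by rewrite !big_split /= -!mulr_sumr sum_ind; ring.
have hs_sum : \sum_i hs i 0 = s.
  rewrite (eq_bigr (fun i => (1 - lam) * d i 0 + c)); last by move=> i _; rewrite hsE.
  rewrite big_split /= -mulr_sumr sd sumr_const card_ord -mulr_natr /c /q.
  rewrite -mulrA divfK /s; first by ring.
  by rewrite gt_eqF.
have hfeas : feasible lam V d hs.
  split.
  - move=> i; exact: le_trans c0 (hsp i).
  - by rewrite hs_sum sd.
  - move=> k.
    have e : (V *m (d - hs)) k 0 = lam * (V *m d) k 0.
      rewrite /hs (mulmxBr V d) (mulmxDr V ((1 - lam) *: d)) -!scalemxAr mxBE mxDE !mxZE Ve0; ring.
    rewrite e ger0_norm //; have := Vdp k; split; nra.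
have hopt := gopt hs hfeas.
have HHdef : \sum_i hs i 0 ^+ 2 = \sum_i hs i 0 * hs i 0.
  by apply: eq_bigr => i _; rewrite expr2.
have E2 := hsum g; rewrite sg in E2.
have E3 := hsum hs; rewrite hs_sum in E3.
have E4 := hsum gam; rewrite gams gn0 in E4.
have Ehg : \sum_i hs i 0 * gam i 0 = \sum_i gam i 0 * hs i 0.
  by apply: eq_bigr => i _; rewrite mulrC.
have Egg : \sum_i gam i 0 * gam i 0 = \sum_i gam i 0 ^+ 2.
  by apply: eq_bigr => i _; rewrite expr2.
rewrite Ehg E4 Egg in E3.
have hs0 : hs n0 0 = (1 - lam) + c by rewrite hsE dE eqxx gn0 mulr0 addr0 mulr1.
have d0 : d n0 0 = 1 by rewrite dE eqxx gn0 mulr0 addr0.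
rewrite d0 in flow.
have Sgg : 0 <= \sum_i g i 0 * gam i 0 by apply: sumr_ge0 => i _; rewrite mulr_ge0.
have Sgam : 0 <= \sum_i gam i 0 ^+ 2 by apply: sumr_ge0 => i _; rewrite sqr_ge0.
have qle : q <= 2.
  rewrite /q ler_pdivrMr // /s.
  have : 2 <= 2 * n%:R :> R by rewrite ler_peMr.
  lra.
set D2 := \sum_i (g i 0 - 1 * hs i 0) ^+ 2.
have ED2 : D2 = \sum_i g i 0 ^+ 2 - 2 * 1 * \sum_i g i 0 * hs i 0
                + 1 ^+ 2 * \sum_i hs i 0 ^+ 2 by apply: sum_sq_sub.
rewrite HHdef E3 E2 in ED2.
rewrite HHdef E3 in hopt.
have Y1 : hs n0 0 - g n0 0 <= 2 * lam * B.
  have e : (1 - lam) * (1 - q) = 1 - lam - q + lam * q by ring.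
  rewrite e in flow; rewrite hs0 /c; lra.
have Y2 : 2 * lam * B <= 2 * (eps * K1).
  have : 0 <= eps * K1 by rewrite mulr_ge0.
  nra.
set S2 := \sum_i gam i 0 ^+ 2.
set Sgg' := \sum_i g i 0 * gam i 0.
set Sh := (1 - lam) * (0 + eps * S2) + c * 1.
have le1 : (1 - lam) * eps <= 1 by nra.
have le0 : 0 <= (1 - lam) * eps by rewrite mulr_ge0 // subr_ge0 ltW.
have Y3 : Sh <= K2.
  have S2p : 0 <= S2 by exact: Sgam.
  have h2 : (1 - lam) * eps * S2 <= S2.
    have t : 0 <= 1 - (1 - lam) * eps by rewrite subr_ge0.
    by have := mulr_ge0 t S2p; lra.
  have h3 : lam * q <= 2.
    have t : 0 <= 1 - lam by rewrite subr_ge0 ltW.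
    by have := mulr_ge0 t q0; lra.
  rewrite /K2 /Sh /c -/S2; lra.
have Z1 : D2 <= 2 * ((1 - lam) * (hs n0 0 - g n0 0) + (1 - lam) * eps * (Sh - Sgg')).
  rewrite ED2 -/Sgg'; move: hopt; rewrite -/Sh ler_pM2l ?invr_gt0 //; lra.
have Z2 : (1 - lam) * (hs n0 0 - g n0 0) <= 2 * (eps * K1).
  have P0 : 0 <= eps * K1 by rewrite mulr_ge0.
  have h : hs n0 0 - g n0 0 <= 2 * (eps * K1) by lra.
  have t : 0 <= 1 - lam by rewrite subr_ge0 ltW.
  have := ler_wpM2l t h; have := mulr_ge0 (ltW lam0) P0; lra.
have Z3 : (1 - lam) * eps * (Sh - Sgg') <= eps * K2.
  have Sgp : 0 <= Sgg' by exact: Sgg.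
  have h : Sh - Sgg' <= K2 by lra.
  have h' : (1 - lam) * eps * (Sh - Sgg') <= (1 - lam) * eps * K2 by apply: ler_wpM2l.
  have := mulr_ge0 (mulr_ge0 (ltW lam0) e0) K2p; lra.
have D2K : D2 <= eps * K by rewrite /K; lra.
have gpos i : 0 < g i 0.
  have := le_sum_term (fun i => (g i 0 - 1 * hs i 0) ^+ 2) i (fun j => sqr_ge0 _).
  rewrite -/D2 /= => Hi.
  have ac : a <= c.
    rewrite /a /c /q ler_wpM2l ?(ltW lam0) // -[X in X <= _]mul1r ler_wpM2r //.
    by rewrite invr_ge0 ltW.
  rewrite ltNge; apply/negP => gi.
  have h1 : a <= hs i 0 - g i 0 by have := hsp i; lra.
  have := ler_pM (ltW ap) (ltW ap) h1 h1.
  move: Hi epsK D2K; rewrite !expr2; lra.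
exact: (@opt_formula _ _ _ _ _ _ _ npos (Ve R n m src dst) Vdp
          (conj (And3 gnn gsum gcon) gopt) gpos).
Qed.
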